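(* Let $U$ be a discrete group with torsion and $e\in\mathbb{C}[U]$ a nontrivial projection; let $T=et+t^{-1}e\in\mathbb{C}[U\wr\mathbb{Z}]$. For $n\ge 2$ and $1\le m\le n-1$ define $r_{m,n}=\sum_{i=1}^{n-1}\beta^{(n)}_{m,i}t^iq_n$ and $p_{m,n}=r_{m,n}r_{m,n}^*$. Then $(p_{m,n}\mid n\ge 2,\ 1\le m\le n-1)$ is a family of pairwise orthogonal projections in $\mathbb{C}[U\wr\mathbb{Z}]$ which is complete, that is, $\sum_{n\ge 2}\sum_{m=1}^{n-1}\mathrm{tr}_{U\wr\mathbb{Z}}(p_{m,n})=1$. Moreover, for $1\le m\le n-1$, $T\,p_{m,n}=\lambda_{m,n}p_{m,n}$.
   Context: $U\wr\mathbb{Z}=(\bigoplus_{i\in\mathbb{Z}}U)\rtimes C_\infty$, where $C_\infty$ is infinite cyclic with generator $t$ acting by the shift $t^{-1}((g_n)_{n})t=(g_{n-1})_n$; $U$ is identified with the subgroup of elements $(\dots,1,u,1,\dots)$ with $u$ in position $0$. A nontrivial projection means $e=e^*=e^2$, $e\ne0,1$. $\mathrm{tr}_{U\wr\mathbb{Z}}(a)$ is the coefficient of $1$ in $a\in\mathbb{C}[U\wr\mathbb{Z}]$. Put $e_i=t^{-i}et^i$, $f_i=1-e_i$, and $q_n=f_1e_2\cdots e_{n-1}f_n$ for $n\ge2$. $\lambda_{m,n}=2\cos(\frac mn\pi)$. For $n\ge 2$, $A_n$ is the $(n-1)\times(n-1)$ matrix with entries $\alpha_{i,j}=1$ if $|i-j|=1$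 and $0$ otherwise, and $B_n=(\beta^{(n)}_{i,j})_{1\le i,j\le n-1}$ is a real orthogonal matrix such that $B_nA_nB_n^*$ is the diagonal matrix with diagonal entries $\lambda_{1,n},\dots,\lambda_{n-1,n}$ in this order (these are the eigenvalues of $A_n$). *)

(* Defs.v *)
From HB Require Import structures.
From mathcomp Require Import all_boot all_order all_algebra zify.
From mathcomp Require Import all_classical all_reals all_analysis.
From mathcomp Require Import complex.
Import Order.TTheory GRing.Theory Num.Theory.
Import numFieldTopology.Exports numFieldNormedType.Exports.

Set Implicit Arguments.
Unset Strict Implicit.
Unset Printing Implicit Defensive.

Local Open Scope ring_scope.

(* An element (f, k) stands for  f * t^k  with f : Z -> U finitely supported. *)

Definition fin_supp (U : groupType) (f : int -> U) : Prop :=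
  exists N : nat, forall n : int, (N < absz n)%N -> f n = 1%g.

Definition wreath (U : groupType) : Type :=
  ({f : int -> U | fin_supp f} * int)%type.

Lemma fin_supp_mul (U : groupType) (f g : int -> U) (a : int) :
  fin_supp f -> fin_supp g -> fin_supp (fun n => (f n * g (n + a))%g).
Proof.
move=> [N1 H1] [N2 H2]; exists (N1 + N2 + absz a)%N => n Hn.
by rewrite H1 ?H2 ?mul1g //; lia.
Qed.

Lemma fin_supp_inv (U : groupType) (f : int -> U) (a : int) :
  fin_supp f -> fin_supp (fun n => (f (n - a))^-1%g).
Proof.
move=> [N H]; exists (N + absz a)%N => n Hn.
by rewrite H ?invg1 //; lia.
Qed.

Lemma fin_supp_one (U : groupType) : fin_supp (fun _ : int => 1%g : U).
Proof. by exists 0%N. Qed.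

Lemma fin_supp_delta0 (U : groupType) (u : U) :
  fin_supp (fun n : int => if n == 0 then u else 1%g).
Proof. by exists 0%N => n Hn; case: eqP => // En; move: Hn; rewrite En. Qed.

(* (f t^a) (g t^b) = (f * (t^a g t^-a)) t^(a+b),  (t^a g t^-a)_n = g_(n+a) *)
Definition wmul (U : groupType) (x y : wreath U) : wreath U :=
  (exist _ _ (fin_supp_mul x.2 (svalP x.1) (svalP y.1)), x.2 + y.2).

Definition winv (U : groupType) (x : wreath U) : wreath U :=
  (exist _ _ (fin_supp_inv x.2 (svalP x.1)), - x.2).

Definition wone (U : groupType) : wreath U :=
  (exist _ _ (fin_supp_one U), 0).

Definition wt (U : groupType) : wreath U :=
  (exist _ _ (fin_supp_one U), 1).

Definition wemb (U : groupType) (u : U) : wreath U :=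
  (exist _ _ (fin_supp_delta0 u), 0).

Definition wpow (U : groupType) (x : wreath U) (k : nat) : wreath U :=
  iter k (wmul x) (wone U).

(* Complex group algebra C[G] of a (discrete) group G: elements are finite   *)
(* formal linear combinations  sum_j c_j g_j  (lists of pairs (c_j, g_j)),   *)
(* two of them being equal in C[G] iff they have the same coefficients.      *)

Definition galg (C : Type) (G : Type) := seq (C * G).

Definition gcoef (C : nmodType) (G : Type) (a : galg C G) (g : G) : C :=
  \sum_(x <- a) (if `[< x.2 = g >] then x.1 else 0).

Definition ga_eq (C : nmodType) (G : Type) (a b : galg C G) : Prop :=
  forall g, gcoef a g = gcoef b g.

Definition gzero (C : Type) (G : Type) : galg C G := [::].
Definition gadd (C : Type) (G : Type) (a b : galg C G) : galg C G := a ++ b.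
Definition gscale (C : ringType) (G : Type) (c : C) (a : galg C G) : galg C G :=
  [seq (c * x.1, x.2) | x <- a].
Definition gsub (C : ringType) (G : Type) (a b : galg C G) : galg C G :=
  gadd a (gscale (-1) b).
Definition gof (C : ringType) (G : Type) (g : G) : galg C G := [:: (1, g)].
Definition gmul (C : ringType) (G : Type) (gm : G -> G -> G) (a b : galg C G)
  : galg C G := [seq (x.1 * y.1, gm x.2 y.2) | x <- a, y <- b].
Definition gstar (C : numClosedFieldType) (G : Type) (gi : G -> G)
  (a : galg C G) : galg C G := [seq ((x.1)^*, gi x.2) | x <- a].
Definition gtr (C : nmodType) (G : Type) (go : G) (a : galg C G) : C :=
  gcoef a go.
Definition gprod (C : ringType) (G : Type) (gm : G -> G -> G) (a0 : galg C G)
  (s : seq (galg C G)) : galg C G := foldl (gmul gm) a0 s.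

Definition gprojection (C : numClosedFieldType) (G : Type) (gm : G -> G -> G)
  (gi : G -> G) (e : galg C G) : Prop :=
  ga_eq (gstar gi e) e /\ ga_eq (gmul gm e e) e.

Notation CU R U := (galg (R[i]) (U : groupType)).
Notation CW R U := (galg (R[i]) (wreath (U : groupType))).

Definition Umul (U : groupType) (x y : U) : U := (x * y)%g.
Definition Uinv (U : groupType) (x : U) : U := (x^-1)%g.

Definition embU (R : realType) (U : groupType) (a : CU R U) : CW R U :=
  [seq (x.1, wemb x.2) | x <- a].

Definition WM (R : realType) (U : groupType) (a b : CW R U) : CW R U := gmul (@wmul U) a b.
Definition WS (R : realType) (U : groupType) (a : CW R U) : CW R U := gstar (@winv U) a.

Definition tpos (R : realType) (U : groupType) (i : nat) : CW R U :=
  @gof R[i] _ (wpow (wt U) i).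
Definition tneg (R : realType) (U : groupType) (i : nat) : CW R U :=
  @gof R[i] _ (wpow (winv (wt U)) i).

Definition Top (R : realType) (U : groupType) (e : CU R U) : CW R U :=
  gadd (WM (embU e) (tpos R U 1)) (WM (tneg R U 1) (embU e)).

Definition ei (R : realType) (U : groupType) (e : CU R U) (i : nat) : CW R U :=
  WM (WM (tneg R U i) (embU e)) (tpos R U i).
Definition fi (R : realType) (U : groupType) (e : CU R U) (i : nat) : CW R U :=
  gsub (@gof R[i] _ (wone U)) (ei e i).

Definition qn (R : realType) (U : groupType) (e : CU R U) (n : nat) : CW R U :=
  WM (gprod (@wmul U) (fi e 1) [seq ei e i | i <- iota 2 (n - 2)]) (fi e n).

Definition lam (R : realType) (m n : nat) : R :=
  2 * cos (m%:R / n%:R * pi).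

Definition Amx (R : realType) (n : nat) : 'M[R]_(n.-1) :=
  \matrix_(i < n.-1, j < n.-1) (if (i.+1 == j :> nat) || (j.+1 == i :> nat)
                                then 1 else 0).

(* the matrix B_n built from 1-based entries beta n i j, 1 <= i,j <= n-1 *)
Definition Bmx (R : realType) (beta : nat -> nat -> nat -> R) (n : nat)
  : 'M[R]_(n.-1) := \matrix_(i < n.-1, j < n.-1) beta n i.+1 j.+1.

Definition rmn (R : realType) (U : groupType) (e : CU R U)
  (beta : nat -> nat -> nat -> R) (m n : nat) : CW R U :=
  flatten [seq gscale ((beta n m i)%:C)%C (WM (tpos R U i) (qn e n))
          | i <- iota 1 n.-1].

Definition pmn (R : realType) (U : groupType) (e : CU R U)
  (beta : nat -> nat -> nat -> R) (m n : nat) : CW R U :=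
  WM (rmn e beta m n) (WS (rmn e beta m n)).

(* Main.v *)
Require Import Defs.
From HB Require Import structures.
From mathcomp Require Import all_boot all_order all_algebra zify.
From mathcomp Require Import all_classical all_reals all_analysis.
From mathcomp Require Import complex.
Import Order.TTheory GRing.Theory Num.Theory.
Import numFieldTopology.Exports numFieldNormedType.Exports.
Local Open Scope classical_set_scope.
Local Open Scope ring_scope.
Local Open Scope complex_scope.
Set Implicit Arguments.
Unset Strict Implicit.
Unset Printing Implicit Defensive.
Section ListAlg.
Variables (C : numClosedFieldType) (G : Type).
Implicit Types (a b : galg C G) (F : G -> C) (g h : G).

Definition npair a F : C := \sum_(x <- a) x.1 * F x.2.

Lemma gcoef_nil g : gcoef ([::] : galg C G) g = 0.
Proof. by rewrite /gcoef big_nil. Qed.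

Lemma gcoef_cons x a g :
  gcoef (x :: a) g = (if `[< x.2 = g >] then x.1 else 0) + gcoef a g.
Proof. by rewrite /gcoef big_cons. Qed.

Lemma gcoef_cat a b g : gcoef (a ++ b) g = gcoef a g + gcoef b g.
Proof. by rewrite /gcoef big_cat. Qed.

Lemma gcoef_scale c a g : gcoef (gscale c a) g = c * gcoef a g.
Proof.
rewrite /gcoef big_map mulr_sumr; apply: eq_bigr => x _ /=.
by case: ifP; rewrite ?mulr0.
Qed.

Lemma gcoef_gof g h : gcoef (gof C h) g = if `[< h = g >] then 1 else 0.
Proof. by rewrite /gcoef /gof big_cons big_nil addr0. Qed.

Definition gdrop a h := seq.filter (fun x => ~~ `[< x.2 = h >]) a.

Lemma npair_split a F h : npair a F = F h * gcoef a h + npair (gdrop a h) F.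
Proof.
rewrite /npair /gcoef (bigID (fun x => `[< x.2 = h >])) /= big_filter; congr (_ + _).
rewrite big_mkcond mulr_sumr; apply: eq_bigr => x _.
by case: asboolP => [->|]; rewrite ?mulr0 // mulrC.
Qed.

Lemma gcoef_gdrop a h g :
  gcoef (gdrop a h) g = if `[< g = h >] then 0 else gcoef a g.
Proof.
rewrite /gcoef big_filter; case: asboolP => [->|ngh].
  by rewrite big1 // => x /asboolPn nx; case: asboolP.
rewrite [RHS](bigID (fun x => `[< x.2 = h >])) /= [X in _ = X + _]big1 ?add0r // => x /asboolP ->.
by case: asboolP => // e; case: ngh.
Qed.

Lemma size_gdrop x a : (size (gdrop (x :: a) x.2) <= size a)%N.
Proof.
rewrite /gdrop /=; case: asboolP => //= _; rewrite size_filter; exact: count_size.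
Qed.

Lemma npair0 a F : (forall g, gcoef a g = 0) -> npair a F = 0.
Proof.
move: {2}(size a) (leqnn (size a)) => n; elim: n a => [|n IH] [|x a] //=.
- by move=> _ _; rewrite /npair big_nil.
- by move=> _ _; rewrite /npair big_nil.
move=> Hs H0; rewrite (npair_split _ _ x.2) H0 mulr0 add0r; apply: IH.
  exact: leq_trans (size_gdrop x a) Hs.
by move=> g; rewrite gcoef_gdrop H0; case: ifP.
Qed.

Lemma npair_cat a b F : npair (a ++ b) F = npair a F + npair b F.
Proof. by rewrite /npair big_cat. Qed.

Lemma npair_scale c a F : npair (gscale c a) F = c * npair a F.
Proof. by rewrite /npair big_map mulr_sumr; apply: eq_bigr => x _ /=; rewrite mulrA. Qed.

Lemma npair_eq a b F : ga_eq a b -> npair a F = npair b F.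
Proof.
move=> Hab; apply/eqP; rewrite -subr_eq0; apply/eqP.
have := @npair0 (a ++ gscale (-1) b) F.
rewrite npair_cat npair_scale mulN1r; apply => g.
by rewrite gcoef_cat gcoef_scale Hab mulN1r subrr.
Qed.

Lemma gcoefE a g : gcoef a g = npair a (fun h => if `[< h = g >] then 1 else 0).
Proof. by rewrite /gcoef /npair; apply: eq_bigr => x _; case: ifP; rewrite ?mulr1 ?mulr0. Qed.

Definition gnorm a := npair a (fun h => Num.conj (gcoef a h)).

Lemma gnorm_pos a : 0 <= gnorm a /\ (gnorm a = 0 -> forall g, gcoef a g = 0).
Proof.
move: {2}(size a) (leqnn (size a)) => n; elim: n a => [|n IH] [|x a] //=.
- by move=> _; rewrite /gnorm /npair big_nil; split=> // _ g; rewrite gcoef_nil.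
- by move=> _; rewrite /gnorm /npair big_nil; split=> // _ g; rewrite gcoef_nil.
move=> Hs; set b := x :: a.
have Hs' : (size (gdrop b x.2) <= n)%N := leq_trans (size_gdrop x a) Hs.
have [IH1 IH2] := IH _ Hs'.
have E : gnorm b = Num.conj (gcoef b x.2) * gcoef b x.2 + gnorm (gdrop b x.2).
  rewrite /gnorm (npair_split _ _ x.2); congr (_ + _).
  rewrite /npair /gdrop !big_filter; apply: eq_bigr => y /asboolPn ny.
  by rewrite gcoef_gdrop; case: asboolP.
have P1 : 0 <= Num.conj (gcoef b x.2) * gcoef b x.2 by rewrite mulrC mul_conjC_ge0.
rewrite E; split; first exact: addr_ge0.
move/eqP; rewrite paddr_eq0 // => /andP[/eqP h1 /eqP h2] g.
have c0 : gcoef b x.2 = 0 by apply/eqP; rewrite -mul_conjC_eq0 mulrC h1.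
have := IH2 h2 g; rewrite gcoef_gdrop; case: asboolP => [->|] //.
Qed.

End ListAlg.
Section Wreath.
Variable U : groupType.
Local Notation W := (wreath U).
Implicit Types x y z : W.

Definition wf (x : W) : int -> U := sval x.1.

Lemma weq x y : (forall n, wf x n = wf y n) -> x.2 = y.2 -> x = y.
Proof.
case: x => [[f hf] a]; case: y => [[g hg] b]; rewrite /wf /= => Hfg Hab.
have efg : f = g by apply: funext.
subst g b; congr (_, _); congr exist; exact: Prop_irrelevance.
Qed.

Lemma wmulA x y z : wmul (wmul x y) z = wmul x (wmul y z).
Proof. by apply: weq => [n|] /=; rewrite /wf /= ?mulgA ?addrA. Qed.

Lemma wmul1x x : wmul (wone U) x = x.
Proof. by apply: weq => [n|] /=; rewrite /wf /= ?mul1g ?addr0 ?add0r. Qed.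

Lemma wmulx1 x : wmul x (wone U) = x.
Proof. by apply: weq => [n|] /=; rewrite /wf /= ?mulg1 ?addr0. Qed.

Lemma wmulVx x : wmul (winv x) x = wone U.
Proof. by apply: weq => [n|] /=; rewrite /wf /= ?mulVg ?addNr. Qed.

Lemma wmulxV x : wmul x (winv x) = wone U.
Proof. by apply: weq => [n|] /=; rewrite /wf /= ?addrK ?mulgV ?subrr. Qed.

Lemma wmul_eqr x y z : (wmul x y = z) <-> (y = wmul (winv x) z).
Proof.
split=> [<-|->]; first by rewrite -wmulA wmulVx wmul1x.
by rewrite -wmulA wmulxV wmul1x.
Qed.

Lemma wmul_eql x y z : (wmul x y = z) <-> (x = wmul z (winv y)).
Proof.
split=> [<-|->]; first by rewrite wmulA wmulxV wmulx1.
by rewrite wmulA wmulVx wmulx1.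
Qed.

Lemma winv1 : winv (wone U) = wone U.
Proof. by rewrite -[LHS]wmul1x wmulxV. Qed.

Lemma winvK x : winv (winv x) = x.
Proof. by rewrite -[LHS]wmulx1 -(wmulVx x) -wmulA wmulVx wmul1x. Qed.

Lemma winv_mul x y : winv (wmul x y) = wmul (winv y) (winv x).
Proof.
have H : wmul (wmul x y) (wmul (winv y) (winv x)) = wone U.
  by rewrite wmulA -(wmulA y) wmulxV wmul1x wmulxV.
by move/wmul_eqr: H; rewrite wmulx1 => ->.
Qed.

Lemma wmulC1 x y : (wmul x y = wone U) <-> (wmul y x = wone U).
Proof.
by split=> /wmul_eqr ->; rewrite wmulx1 wmulVx.
Qed.

Lemma winv_eq x g : (winv x = g) <-> (x = winv g).
Proof. by split=> [<-|->]; rewrite winvK. Qed.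

Variable R : realType.
Local Notation C := (R[i]).

Record Qt := QT { qf : W -> C ; qfP : exists a : galg C W, gcoef a = qf }.

HB.instance Definition _ := gen_eqMixin Qt.
HB.instance Definition _ := gen_choiceMixin Qt.

Definition mk (a : galg C W) : Qt := @QT (gcoef a) (ex_intro _ a erefl).
Definition rep (q : Qt) : galg C W := sval (cid (qfP q)).
Lemma repP q : gcoef (rep q) = qf q.
Proof. exact: (svalP (cid (qfP q))). Qed.

Lemma qeq p q : qf p = qf q -> p = q.
Proof.
case: p => f fP; case: q => g gP /= efg; subst g; congr QT; exact: Prop_irrelevance.
Qed.

Lemma mk_eq a b : ga_eq a b -> mk a = mk b.
Proof. by move=> H; apply: qeq; apply: funext. Qed.

Lemma mk_inj a b : mk a = mk b -> ga_eq a b.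
Proof. by move=> /(congr1 qf) /= E g; rewrite E. Qed.

Lemma repK q : mk (rep q) = q.
Proof. by apply: qeq; rewrite /= repP. Qed.

Lemma mk_rep a : ga_eq (rep (mk a)) a.
Proof. by move=> g; rewrite repP. Qed.

Lemma qind (P : Qt -> Prop) : (forall a, P (mk a)) -> forall q, P q.
Proof. by move=> H q; rewrite -(repK q). Qed.

Definition qzero : Qt := mk [::].
Definition qadd p q : Qt := mk (rep p ++ rep q).
Definition qopp p : Qt := mk (gscale (-1) (rep p)).

Lemma mkD a b : mk (a ++ b) = qadd (mk a) (mk b).
Proof. by apply: mk_eq => g; rewrite !gcoef_cat !mk_rep. Qed.

Lemma mkN a : mk (gscale (-1) a) = qopp (mk a).
Proof. by apply: mk_eq => g; rewrite !gcoef_scale !mk_rep. Qed.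

Lemma qaddA : associative qadd.
Proof. by elim/qind=> a; elim/qind=> b; elim/qind=> c; rewrite -!mkD catA. Qed.

Lemma qaddC : commutative qadd.
Proof.
elim/qind=> a; elim/qind=> b; rewrite -!mkD; apply: mk_eq => g.
by rewrite !gcoef_cat addrC.
Qed.

Lemma qadd0 : left_id qzero qadd.
Proof. by elim/qind=> a; rewrite -mkD. Qed.

Lemma qaddN : left_inverse qzero qopp qadd.
Proof.
elim/qind=> a; rewrite -mkN -mkD; apply: mk_eq => g.
by rewrite gcoef_cat gcoef_scale gcoef_nil mulN1r addNr.
Qed.

HB.instance Definition _ := GRing.isZmodule.Build Qt qaddA qaddC qadd0 qaddN.

Lemma mk0 : mk [::] = 0. Proof. by []. Qed.
Lemma mkDE a b : mk (a ++ b) = mk a + mk b. Proof. exact: mkD. Qed.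
Lemma mkNE a : mk (gscale (-1) a) = - mk a. Proof. exact: mkN. Qed.

Local Notation gm := (@gmul C W (@wmul U)).

Lemma sum_gmul a b (F : C * W -> C) : \sum_(w <- gm a b) F w =
  \sum_(x <- a) \sum_(y <- b) F (x.1 * y.1, wmul x.2 y.2).
Proof. exact: big_allpairs_dep. Qed.

Lemma gcoef_mul0 a b g : gcoef (gm a b) g =
  \sum_(x <- a) \sum_(y <- b) (if `[< wmul x.2 y.2 = g >] then x.1 * y.1 else 0).
Proof. by rewrite /gcoef /gmul big_allpairs_dep. Qed.

Lemma gcoef_mulL a b g :
  gcoef (gm a b) g = npair a (fun h => gcoef b (wmul (winv h) g)).
Proof.
rewrite gcoef_mul0 /npair; apply: eq_bigr => x _; rewrite /gcoef mulr_sumr.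
apply: eq_bigr => y _; have E := wmul_eqr x.2 y.2 g.
by case: asboolP => H; case: asboolP => H'; rewrite ?mulr0 //; [case: H'; apply/E | case: H; apply/E].
Qed.

Lemma gm_eq a a' b b' : ga_eq a a' -> ga_eq b b' -> ga_eq (gm a b) (gm a' b').
Proof.
move=> Ha Hb g; rewrite !gcoef_mulL (npair_eq _ Ha); congr npair.
by apply: funext => h; rewrite Hb.
Qed.

Definition qone : Qt := mk (gof C (wone U)).
Definition qmul p q : Qt := mk (gm (rep p) (rep q)).

Lemma mkM a b : mk (gm a b) = qmul (mk a) (mk b).
Proof. by apply: mk_eq; apply: gm_eq => g; rewrite mk_rep. Qed.

Lemma qmulA : associative qmul.
Proof.
elim/qind=> a; elim/qind=> b; elim/qind=> c; rewrite -!mkM; apply: mk_eq => g.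
rewrite !gcoef_mul0 sum_gmul /=; apply: eq_bigr => x _.
rewrite sum_gmul /=; apply: eq_bigr => y _; apply: eq_bigr => z _.
by rewrite wmulA mulrA.
Qed.

Lemma qmul1 : left_id qone qmul.
Proof.
elim/qind=> a; rewrite -mkM; apply: mk_eq => g.
by rewrite gcoef_mulL /npair big_cons big_nil addr0 mul1r /= winv1 wmul1x.
Qed.

Lemma qmulr1 : right_id qone qmul.
Proof.
elim/qind=> a; rewrite -mkM; apply: mk_eq => g.
rewrite gcoef_mul0 /gcoef; apply: eq_bigr => x _.
by rewrite big_cons big_nil addr0 /= wmulx1 mulr1.
Qed.

Lemma qmulDl : left_distributive qmul qadd.
Proof.
elim/qind=> a; elim/qind=> b; elim/qind=> c; rewrite -(mkD a b) -!mkM -mkD.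
by apply: mk_eq => g; rewrite gcoef_cat !gcoef_mul0 big_cat.
Qed.

Lemma qmulDr : right_distributive qmul qadd.
Proof.
elim/qind=> a; elim/qind=> b; elim/qind=> c; rewrite -(mkD b c) -!mkM -mkD.
apply: mk_eq => g; rewrite gcoef_cat !gcoef_mul0 -big_split /=.
by apply: eq_bigr => x _; rewrite big_cat.
Qed.

Lemma qone_neq0 : qone != 0.
Proof.
apply/eqP => /mk_inj /(_ (wone U)); rewrite gcoef_gof gcoef_nil asboolT //.
by move/eqP; rewrite oner_eq0.
Qed.

HB.instance Definition _ := GRing.Zmodule_isNzRing.Build Qt qmulA qmul1 qmulr1 qmulDl qmulDr qone_neq0.

Lemma mkME a b : mk (gm a b) = mk a * mk b. Proof. exact: mkM. Qed.
Lemma mk1 : mk (gof C (wone U)) = 1. Proof. by []. Qed.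

Implicit Types (a b : galg C W) (c d : C) (g : W) (p q : Qt).
Local Notation gst := (@gstar C W (@winv U)).

Definition sc (c : C) : Qt := mk [:: (c, wone U)].

Lemma gcoef_sc c g : gcoef [:: (c, wone U)] g = if `[< wone U = g >] then c else 0.
Proof. by rewrite /gcoef big_cons big_nil addr0. Qed.

Lemma mk_scale c a : mk (gscale c a) = sc c * mk a.
Proof.
rewrite -mkME; apply: mk_eq => g.
by rewrite gcoef_scale gcoef_mulL /npair big_cons big_nil addr0 /= winv1 wmul1x.
Qed.

Lemma sc_comm c q : sc c * q = q * sc c.
Proof.
elim/qind: q => a; rewrite -mk_scale -mkME; apply: mk_eq => g.
rewrite gcoef_scale gcoef_mul0 /gcoef mulr_sumr; apply: eq_bigr => x _.
rewrite big_cons big_nil addr0 /= wmulx1.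
by case: ifP; rewrite ?mulr0 // mulrC.
Qed.

Lemma scM c d : sc (c * d) = sc c * sc d.
Proof.
rewrite {2}/sc -mk_scale; apply: mk_eq => g.
by rewrite gcoef_scale !gcoef_sc; case: ifP; rewrite ?mulr0.
Qed.

Lemma scD c d : sc (c + d) = sc c + sc d.
Proof.
rewrite /sc -mkDE; apply: mk_eq => g.
by rewrite gcoef_cat !gcoef_sc; case: ifP; rewrite ?addr0.
Qed.

Lemma sc0 : sc 0 = 0.
Proof. by apply: mk_eq => g; rewrite gcoef_sc gcoef_nil; case: ifP. Qed.

Lemma sc1 : sc 1 = 1.
Proof. by []. Qed.

Lemma sc_sum (I : Type) (s : seq I) (F : I -> C) :
  sc (\sum_(i <- s) F i) = \sum_(i <- s) sc (F i).
Proof. exact: (big_morph sc scD sc0). Qed.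

Definition qstar (q : Qt) : Qt := mk (gst (rep q)).

Lemma gcoef_star a g : gcoef (gst a) g = Num.conj (gcoef a (winv g)).
Proof.
rewrite /gcoef /gstar big_map rmorph_sum; apply: eq_bigr => x _ /=.
have E := winv_eq x.2 g.
case: asboolP => H; case: asboolP => H'; rewrite ?rmorph0 //.
  by case: H'; apply/E.
by case: H; apply/E.
Qed.

Lemma mkS a : mk (gst a) = qstar (mk a).
Proof. by apply: mk_eq => g; rewrite !gcoef_star mk_rep. Qed.

Lemma qstarM p q : qstar (p * q) = qstar q * qstar p.
Proof.
elim/qind: p => a; elim/qind: q => b.
rewrite -(mkME a b) -!mkS -mkME; apply: mk_eq => g.
rewrite gcoef_star !gcoef_mul0 /gstar big_map rmorph_sum exchange_big big_map /=.
apply: eq_bigr => x _; rewrite rmorph_sum; apply: eq_bigr => y _ /=.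
rewrite -winv_mul; have E := winv_eq (wmul x.2 y.2) g.
case: asboolP => H; case: asboolP => H'; rewrite ?rmorph0 //; try by rewrite rmorphM mulrC.
all: by exfalso; first [apply: H'; apply/E | apply: H; apply/E].
Qed.

Lemma qstarK q : qstar (qstar q) = q.
Proof.
elim/qind: q => a; rewrite -!mkS; apply: mk_eq => g.
by rewrite !gcoef_star conjCK winvK.
Qed.

Lemma qstarD p q : qstar (p + q) = qstar p + qstar q.
Proof.
elim/qind: p => a; elim/qind: q => b; rewrite -mkDE -!mkS -mkDE.
by rewrite /gstar map_cat.
Qed.

Lemma qstar0 : qstar 0 = 0.
Proof. by rewrite -mk0 -mkS. Qed.

Lemma qstar1 : qstar 1 = 1.
Proof. by rewrite -mk1 -mkS /gstar /= conjC1 winv1. Qed.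

Lemma qstar_sc c : qstar (sc c) = sc (Num.conj c).
Proof. by rewrite /sc -mkS /gstar /= winv1. Qed.

Lemma qstar_sum (I : Type) (s : seq I) (F : I -> Qt) :
  qstar (\sum_(i <- s) F i) = \sum_(i <- s) qstar (F i).
Proof. exact: (big_morph qstar qstarD qstar0). Qed.

Definition qtr (q : Qt) : C := gcoef (rep q) (wone U).

Lemma qtr_mk a : qtr (mk a) = gcoef a (wone U).
Proof. exact: mk_rep. Qed.

Lemma qtrD p q : qtr (p + q) = qtr p + qtr q.
Proof.
elim/qind: p => a; elim/qind: q => b; rewrite -mkDE !qtr_mk; exact: gcoef_cat.
Qed.

Lemma qtr0 : qtr 0 = 0.
Proof. by rewrite -mk0 qtr_mk gcoef_nil. Qed.

Lemma qtr_sum (I : Type) (s : seq I) (F : I -> Qt) :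
  qtr (\sum_(i <- s) F i) = \sum_(i <- s) qtr (F i).
Proof. exact: (big_morph qtr qtrD qtr0). Qed.

Lemma qtr_sc c q : qtr (sc c * q) = c * qtr q.
Proof. by elim/qind: q => a; rewrite -mk_scale !qtr_mk gcoef_scale. Qed.

Lemma qtrC p q : qtr (p * q) = qtr (q * p).
Proof.
elim/qind: p => a; elim/qind: q => b; rewrite -!mkME !qtr_mk !gcoef_mul0.
rewrite exchange_big; apply: eq_bigr => y _; apply: eq_bigr => x _.
have E := wmulC1 y.2 x.2.
case: asboolP => H; case: asboolP => H' //; try by rewrite mulrC.
all: by exfalso; first [apply: H'; apply/E | apply: H; apply/E].
Qed.

Lemma qtr_norm a : qtr (mk a * qstar (mk a)) = gnorm a.
Proof.
rewrite -mkS -mkME qtr_mk gcoef_mul0 /gnorm /npair; apply: eq_bigr => x _.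
rewrite /gstar big_map /gcoef rmorph_sum mulr_sumr; apply: eq_bigr => y _ /=.
have E : wmul x.2 (winv y.2) = wone U <-> y.2 = x.2.
  by rewrite wmul_eql wmul1x winvK; split=> ->.
by case: asboolP => H; case: asboolP => H'; rewrite ?rmorph0 ?mulr0 //;
  [case: H'; apply/E | case: H; apply/E].
Qed.
Lemma fin_supp_del (j : int) (u : U) :
  fin_supp (fun n : int => if n == j then u else 1%g).
Proof.
exists `|j|%N => n Hn; case: eqP => // e; subst n; by rewrite ltnn in Hn.
Qed.

Definition del (j : int) (u : U) : W :=
  (exist _ (fun n : int => if n == j then u else 1%g) (fin_supp_del j u), 0).

Definition tt (k : int) : W := (exist _ (fun _ : int => 1%g) (fin_supp_one U), k).

Lemma del_mul j u v : wmul (del j u) (del j v) = del j (u * v)%g.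
Proof.
apply: weq => [n|] /=; rewrite /wf /= ?addr0 //.
by case: eqP; rewrite ?mulg1.
Qed.

Lemma del_comm i j u v : i != j -> wmul (del i u) (del j v) = wmul (del j v) (del i u).
Proof.
move=> nij; apply: weq => [n|] /=; rewrite /wf /= ?addr0 //.
have [ni|ni] := boolP (n == i); have [nj|nj] := boolP (n == j);
  rewrite ?ni ?nj ?mulg1 ?mul1g //.
by move: nij; rewrite -(eqP ni) -(eqP nj) eqxx.
Qed.

Lemma del_inv j u : winv (del j u) = del j (u^-1)%g.
Proof.
apply: weq => [n|] /=; rewrite /wf /= ?oppr0 ?subr0 //.
by case: eqP; rewrite ?invg1.
Qed.

Lemma del1 j : del j 1%g = wone U.
Proof. by apply: weq => [n|] //=; rewrite /wf /=; case: eqP. Qed.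

Lemma del_inj j u v : del j u = del j v -> u = v.
Proof. by move=> /(congr1 (fun x => wf x j)); rewrite /wf /= eqxx. Qed.

Lemma del_eq1 j u : del j u = wone U <-> u = 1%g.
Proof. by split=> [|->]; [rewrite -(del1 j); apply: del_inj | exact: del1]. Qed.

Lemma tt_mul k l : wmul (tt k) (tt l) = tt (k + l).
Proof. by apply: weq => [n|] //=; rewrite /wf /= mulg1. Qed.

Lemma tt0 : tt 0 = wone U.
Proof. by []. Qed.

Lemma tt_inv k : winv (tt k) = tt (- k).
Proof. by apply: weq => [n|] //=; rewrite /wf /= invg1. Qed.

Lemma tt_del k i u : wmul (tt k) (del i u) = wmul (del (i - k) u) (tt k).
Proof.
apply: weq => [n|] /=; rewrite /wf /= ?addr0 ?add0r // mul1g mulg1.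
have -> : (n + k == i) = (n == i - k).
  by apply/eqP/eqP => [<-|->]; rewrite ?addrK ?subrK.
by [].
Qed.

Lemma wpow_wt (i : nat) : wpow (wt U) i = tt i.
Proof.
elim: i => [|i IH] //=; rewrite /wpow /= -/(wpow (wt U) i) IH.
have -> : wt U = tt 1 by [].
by rewrite tt_mul intS.
Qed.

Lemma wpow_wtV (i : nat) : wpow (winv (wt U)) i = tt (- i%:Z).
Proof.
elim: i => [|i IH] //=; rewrite /wpow /= -/(wpow (winv (wt U)) i) IH.
have -> : wt U = tt 1 by [].
by rewrite tt_inv tt_mul intS opprD.
Qed.

Lemma wemb_del u : wemb u = del 0 u.
Proof. by apply: weq. Qed.

Definition T (k : int) : Qt := mk (gof C (tt k)).
Definition Phi (j : int) (a : galg C U) : Qt := mk [seq (w.1, del j w.2) | w <- a].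

Lemma T_add k l : T k * T l = T (k + l).
Proof. by rewrite /T -mkME /gmul /= mulr1 tt_mul. Qed.

Lemma T0 : T 0 = 1.
Proof. by []. Qed.

Lemma T_star k : qstar (T k) = T (- k).
Proof. by rewrite /T -mkS /gstar /= conjC1 tt_inv. Qed.

Lemma gcoef_Phi j (a : galg C U) g :
  gcoef [seq (w.1, del j w.2) | w <- a] g = npair a (fun u => if `[< del j u = g >] then 1 else 0).
Proof. by rewrite /gcoef big_map /npair; apply: eq_bigr => w _ /=; case: ifP; rewrite ?mulr1 ?mulr0. Qed.

Lemma Phi_eq j (a b : galg C U) : ga_eq a b -> Phi j a = Phi j b.
Proof. by move=> H; apply: mk_eq => g; rewrite !gcoef_Phi (npair_eq _ H). Qed.

Lemma Phi_mul j (a b : galg C U) : Phi j (gmul (@Umul U) a b) = Phi j a * Phi j b.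
Proof.
rewrite /Phi -mkME; apply: mk_eq => g.
rewrite gcoef_mul0 /gcoef big_map /gmul big_allpairs_dep big_map.
apply: eq_bigr => x _; rewrite big_map; apply: eq_bigr => y _ /=.
by rewrite del_mul.
Qed.

Lemma Phi_star j (a : galg C U) : Phi j (gstar (@Uinv U) a) = qstar (Phi j a).
Proof.
rewrite /Phi -mkS /gstar -!map_comp; congr mk; apply: eq_map => x /=.
by rewrite del_inv.
Qed.

Lemma Phi1 j : Phi j (gof C 1%g) = 1.
Proof. by rewrite /Phi /= del1. Qed.

Lemma Phi_sub j (a b : galg C U) : Phi j (gsub a b) = Phi j a - Phi j b.
Proof.
rewrite /Phi /gsub /gadd map_cat mkDE -mkNE; congr (_ + mk _).
by rewrite /gscale -!map_comp; apply: eq_map.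
Qed.

Lemma Phi_comm i j (a b : galg C U) : i != j -> Phi i a * Phi j b = Phi j b * Phi i a.
Proof.
move=> nij; rewrite /Phi -!mkME; apply: mk_eq => g.
rewrite !gcoef_mul0 !big_map exchange_big big_map /=; apply: eq_bigr => y _.
rewrite big_map; apply: eq_bigr => x _ /=.
by rewrite del_comm // mulrC.
Qed.

Lemma T_Phi k i (a : galg C U) : T k * Phi i a = Phi (i - k) a * T k.
Proof.
rewrite /Phi /T -!mkME; apply: mk_eq => g.
rewrite !gcoef_mul0 big_cons big_nil addr0 !big_map; apply: eq_bigr => x _ /=.
by rewrite big_cons big_nil addr0 /= mul1r mulr1 tt_del.
Qed.

Lemma Phi_T j k (a : galg C U) : Phi j a * T k = T k * Phi (j + k) a.
Proof. by rewrite T_Phi addrK. Qed.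

Lemma mk_emb (a : galg C U) : mk (embU a) = Phi 0 a.
Proof. by rewrite /embU /Phi; congr mk; apply: eq_map => x; rewrite wemb_del. Qed.

Lemma mk_tpos i : mk (tpos R U i) = T i.
Proof. by rewrite /tpos /T wpow_wt. Qed.

Lemma mk_tneg i : mk (tneg R U i) = T (- i%:Z).
Proof. by rewrite /tneg /T wpow_wtV. Qed.
Lemma foldl_prod (a0 : Qt) (s : seq Qt) : foldl *%R a0 s = a0 * \prod_(q <- s) q.
Proof.
elim: s a0 => [|q s IH] a0 /=; first by rewrite big_nil mulr1.
by rewrite IH big_cons mulrA.
Qed.

Section Proj.
Variable e : galg C U.
Hypothesis e_proj : gprojection (@Umul U) (@Uinv U) e.

Definition E (j : int) : Qt := Phi j e.
Definition F (j : int) : Qt := 1 - E j.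

Lemma E_idem j : E j * E j = E j.
Proof. by rewrite /E -Phi_mul; apply: Phi_eq; case: e_proj. Qed.

Lemma E_star j : qstar (E j) = E j.
Proof. by rewrite /E -Phi_star; apply: Phi_eq; case: e_proj. Qed.

Lemma E_comm i j : GRing.comm (E i) (E j).
Proof.
have [->|nij] := eqVneq i j; first exact: commr_refl.
exact: Phi_comm.
Qed.

Lemma qstarN q : qstar (- q) = - qstar q.
Proof. by apply/eqP; rewrite -subr_eq0 opprK -qstarD addNr qstar0. Qed.

Lemma F_star j : qstar (F j) = F j.
Proof. by rewrite /F qstarD qstarN qstar1 E_star. Qed.

Lemma EF0 j : E j * F j = 0.
Proof. by rewrite /F mulrBr mulr1 E_idem subrr. Qed.

Lemma FE0 j : F j * E j = 0.
Proof. by rewrite /F mulrBl mul1r E_idem subrr. Qed.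

Lemma F_idem j : F j * F j = F j.
Proof. by rewrite {1}/F mulrBl mul1r EF0 subr0. Qed.

Definition cE (p : Qt) := forall j, GRing.comm p (E j).

Lemma cE_E i : cE (E i). Proof. by move=> j; exact: E_comm. Qed.
Lemma cE_1 : cE 1. Proof. by move=> j; apply/commr_sym/commr1. Qed.
Lemma cE_F i : cE (F i).
Proof. by move=> j; apply/commr_sym/commrB; [apply: commr1 | apply/commr_sym/E_comm]. Qed.
Lemma cE_M p q : cE p -> cE q -> cE (p * q).
Proof. by move=> hx hy j; apply/commr_sym/commrM; apply/commr_sym. Qed.
Lemma cE_prod (s : seq nat) : cE (\prod_(i <- s) E i%:Z).
Proof. by move=> j; apply/commr_sym/commr_prod => i _; apply: E_comm. Qed.
Lemma cE_commF p j : cE p -> GRing.comm p (F j).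
Proof. by move=> hx; apply: commrB; [apply: commr1 | apply: hx]. Qed.

Definition Pn (n : nat) : Qt := \prod_(i <- iota 2 (n - 2)) E i%:Z.
Definition Qn (n : nat) : Qt := F 1 * Pn n * F n%:Z.

Lemma cE_Q n : cE (Qn n).
Proof. by apply: cE_M; [apply: cE_M; [apply: cE_F | apply: cE_prod] | apply: cE_F]. Qed.

Lemma prodE_absorb (s : seq nat) j : j \in s ->
  (\prod_(i <- s) E i%:Z) * E j%:Z = \prod_(i <- s) E i%:Z.
Proof.
elim: s => [|i s IH] //; rewrite in_cons big_cons => /orP[/eqP ->|js].
  by rewrite -mulrA (cE_prod s) mulrA E_idem.
by rewrite -mulrA IH.
Qed.

Lemma QE_in (n p : nat) : (2 <= p < n)%N -> Qn n * E p%:Z = Qn n.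
Proof.
move=> hp; rewrite /Qn -mulrA (cE_F n%:Z) mulrA -(mulrA (F 1)) /Pn prodE_absorb //.
by rewrite mem_iota; lia.
Qed.

Lemma QE_1 n : (2 <= n)%N -> Qn n * E 1 = 0.
Proof. by move=> _; rewrite (cE_Q n 1) /Qn !mulrA EF0 !mul0r. Qed.

Lemma QE_n n : Qn n * E n%:Z = 0.
Proof. by rewrite /Qn -mulrA FE0 mulr0. Qed.

Lemma EQ_in (n p : nat) : (2 <= p < n)%N -> E p%:Z * Qn n = Qn n.
Proof. by move=> hp; rewrite -(cE_Q n) QE_in. Qed.

Lemma QF_1 n : (2 <= n)%N -> Qn n * F 1 = Qn n.
Proof. by move=> hn; rewrite /F mulrBr mulr1 QE_1 // subr0. Qed.

Lemma QF_n n : Qn n * F n%:Z = Qn n.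
Proof. by rewrite /F mulrBr mulr1 QE_n subr0. Qed.

Lemma FQ_1 n : (2 <= n)%N -> F 1 * Qn n = Qn n.
Proof. by move=> hn; rewrite -(cE_commF 1 (cE_Q n)) QF_1. Qed.

Lemma FQ_n n : F n%:Z * Qn n = Qn n.
Proof. by rewrite -(cE_commF n%:Z (cE_Q n)) QF_n. Qed.

Lemma QP n : (2 <= n)%N -> Qn n * Pn n = Qn n.
Proof.
move=> hn; rewrite /Pn.
have : all (fun i => 2 <= i < n)%N (iota 2 (n - 2)).
  by apply/allP => i; rewrite mem_iota; lia.
elim: (iota 2 (n - 2)) => [|i s IH] /=; first by rewrite big_nil mulr1.
by move=> /andP[hi hs]; rewrite big_cons mulrA QE_in // IH.
Qed.

Lemma Q_idem n : (2 <= n)%N -> Qn n * Qn n = Qn n.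
Proof.
by move=> hn; rewrite {2}/Qn !mulrA QF_1 // QP // QF_n.
Qed.

Lemma P_star (s : seq nat) : qstar (\prod_(i <- s) E i%:Z) = \prod_(i <- s) E i%:Z.
Proof.
elim: s => [|i s IH]; first by rewrite !big_nil qstar1.
by rewrite !big_cons qstarM IH E_star (cE_prod s).
Qed.

Lemma Q_star n : qstar (Qn n) = Qn n.
Proof.
rewrite /Qn !qstarM !F_star /Pn P_star.
rewrite (cE_commF 1 (cE_prod _)) mulrA (cE_commF 1 (cE_F n%:Z)) -mulrA.
by rewrite -(cE_commF n%:Z (cE_prod _)) mulrA.
Qed.

Lemma F_T j k : F j * T k = T k * F (j + k).
Proof. by rewrite /F mulrBl mulrBr mul1r mulr1 /E Phi_T. Qed.

Lemma T_F k i : T k * F i = F (i - k) * T k.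
Proof. by rewrite /F mulrBl mulrBr mul1r mulr1 /E T_Phi. Qed.

Lemma hz1 (a b x y d : Qt) : x * y = 0 -> a * (b * x) * (y * d) = 0.
Proof. by move=> H; rewrite -!mulrA (mulrA x) H mul0r !mulr0. Qed.
Lemma hz2 (a x y b d : Qt) : x * y = 0 -> a * x * (y * b) * d = 0.
Proof. by move=> H; rewrite -!mulrA (mulrA x) H mul0r !mulr0. Qed.
Lemma hz3 (a x y d : Qt) : x * y = 0 -> a * x * (y * d) = 0.
Proof. by move=> H; rewrite -!mulrA (mulrA x) H mul0r !mulr0. Qed.
Lemma hA (a b c d : Qt) : a * b * (c * d) = a * (b * c) * d.
Proof. by rewrite !mulrA. Qed.

Lemma key (n n' i j : nat) : (2 <= n)%N -> (2 <= n')%N -> (1 <= i < n)%N -> (1 <= j < n')%N ->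
  Qn n * T (- i%:Z) * (T j%:Z * Qn n') = if (i == j) && (n == n') then Qn n else 0.
Proof.
move=> hn hn' hi hj; rewrite (mulrA (Qn n * T _)) -(mulrA (Qn n)) T_add.
have [ltij|ltji|eij] := ltngtP i j.
- rewrite andFb.
  have ek : - i%:Z + j%:Z = (j - i)%N%:Z by lia.
  rewrite ek -(QF_1 hn) -(mulrA (Qn n)) F_T.
  rewrite -(EQ_in (n := n') (p := (1 + (j - i))%N)); last by lia.
  have -> : 1 + (j - i)%N%:Z = (1 + (j - i))%N%:Z by lia.
  exact/hz1/FE0.
- rewrite ?andFb.
  have ek : - i%:Z + j%:Z = - (i - j)%N%:Z by lia.
  rewrite ek -(FQ_1 hn') hA T_F.
  have -> : 1 - - (i - j)%N%:Z = (1 + (i - j))%N%:Z by lia.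
  rewrite -(QE_in (n := n) (p := (1 + (i - j))%N)); last by lia.
  exact/hz2/EF0.
- subst j; rewrite ?eqxx ?andTb addNr T0 mulr1.
  have [ltn|ltn|<-] := ltngtP n n'.
  + rewrite ?andbF.
    rewrite -(QF_n n) -(EQ_in (n := n') (p := n)); last by lia.
    exact/hz3/FE0.
  + rewrite ?andbF.
    rewrite -(FQ_n n') -(QE_in (n := n) (p := n')); last by lia.
    exact/hz3/EF0.
  + by rewrite ?eqxx Q_idem.
Qed.

End Proj.
End Wreath.
Section Main.
Variables (U : groupType) (R : realType).
Local Notation W := (wreath U).
Local Notation C := (R[i]).
Local Notation Q := (Qt U R).
Local Notation T := (@T U R).
Local Notation sc := (@sc U R).
Variable e : galg C U.
Hypothesis e_proj : gprojection (@Umul U) (@Uinv U) e.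

Lemma mk_ei (i : nat) : mk (ei e i) = E e i%:Z.
Proof.
rewrite /ei /WM !mkME mk_tneg mk_emb mk_tpos T_Phi -mulrA T_add addNr T0 mulr1.
by rewrite sub0r opprK.
Qed.

Lemma mk_fi (i : nat) : mk (fi e i) = F e i%:Z.
Proof. by rewrite /fi /gsub /gadd mkDE mkNE mk1 mk_ei. Qed.

Lemma mk_gprod (a0 : galg C W) (s : seq (galg C W)) :
  mk (gprod (@wmul U) a0 s) = foldl *%R (mk a0) (map (@mk U R) s).
Proof.
elim: s a0 => [|x s IH] a0 //=.
by rewrite /gprod /= -/(gprod _ _ s) IH mkME.
Qed.

Lemma mk_qn (n : nat) : mk (qn e n) = Qn e n.
Proof.
rewrite /qn /WM mkME mk_gprod foldl_prod mk_fi mk_fi -map_comp big_map /Qn /Pn.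
by congr (_ * _ * _); apply: eq_bigr => i _ /=; rewrite mk_ei.
Qed.

Lemma mk_flatten (I : Type) (s : seq I) (f : I -> galg C W) :
  mk (flatten [seq f i | i <- s]) = \sum_(i <- s) mk (f i).
Proof. by elim: s => [|i s IH] /=; rewrite ?big_nil ?big_cons ?mkDE ?IH. Qed.

Lemma sum_iota1 (N : nat) (G : nat -> Q) :
  \sum_(i <- iota 1 N) G i = \sum_(k < N) G k.+1.
Proof.
have -> : iota 1 N = map (addn 1) (iota 0 N) by rewrite -iotaDl addn0.
rewrite big_map -{1}(subn0 N) -/(index_iota 0 N) big_mkord.
by apply: eq_bigr => k _; rewrite add1n.
Qed.

Definition rr (n : nat) (v : nat -> R) : Q :=
  \sum_(k < n.-1) sc (v k.+1)%:C * (T (k.+1)%:Z * Qn e n).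

Lemma mk_rmn beta m n : mk (rmn e beta m n) = rr n (beta n m).
Proof.
rewrite /rmn mk_flatten sum_iota1; apply: eq_bigr => k _.
by rewrite mk_scale /WM mkME mk_tpos mk_qn.
Qed.

Lemma mk_pmn beta m n : mk (pmn e beta m n) = rr n (beta n m) * qstar (rr n (beta n m)).
Proof. by rewrite /pmn /WM /WS mkME mkS mk_rmn. Qed.

Lemma conjC_real (x : R) : Num.conj (x%:C) = x%:C :> C.
Proof. exact: conjc_real. Qed.

Lemma rr_star n v : qstar (rr n v) =
  \sum_(k < n.-1) sc (v k.+1)%:C * (Qn e n * T (- (k.+1)%:Z)).
Proof.
rewrite /rr qstar_sum; apply: eq_bigr => k _.
by rewrite (qstarM (sc _)) (qstarM (T _)) T_star (Q_star e_proj) qstar_sc conjC_real sc_comm.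
Qed.

Lemma sum_delta (N c : nat) (G : nat -> Q) :
  \sum_(l < N) (if c == l then G l else 0) = if (c < N)%N then G c else 0.
Proof.
elim: N => [|N IH]; first by rewrite big_ord0.
rewrite big_ord_recr /= IH.
have [ltc|gtc|->] := ltngtP c N.
- by rewrite /= addr0 ltnS (ltnW ltc).
- by rewrite /= addr0 ltnS leqNgt gtc.
- by rewrite /= add0r ltnSn.
Qed.

Lemma ltn_pred_S (k n : nat) : (k < n.-1)%N -> (0 < k.+1 < n)%N.
Proof. by case: n => //= n; rewrite ltnS. Qed.

Lemma hcomm4 (c : C) (a x y : Q) : a * x * (sc c * y) = a * sc c * (x * y).
Proof. by rewrite -!mulrA; congr (_ * _); rewrite !mulrA (sc_comm c x). Qed.

Lemma rr_mul n n' v v' : (2 <= n)%N -> (2 <= n')%N ->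
  qstar (rr n v) * rr n' v' =
  if n == n' then sc (\sum_(k < n.-1) v k.+1 * v' k.+1)%:C * Qn e n else 0.
Proof.
move=> hn hn'; rewrite rr_star /rr mulr_suml.
under eq_bigr => k _ do rewrite mulr_sumr.
have E1 : forall (k : 'I_n.-1) (l : 'I_n'.-1),
  sc (v k.+1)%:C * (Qn e n * T (- (k.+1)%:Z)) * (sc (v' l.+1)%:C * (T (l.+1)%:Z * Qn e n'))
  = sc (v k.+1 * v' l.+1)%:C * (if (k.+1 == l.+1) && (n == n') then Qn e n else 0).
  move=> k l; rewrite -(key e_proj (n := n) (n' := n') (i := k.+1) (j := l.+1)) //; last 2 first.
  - exact: ltn_pred_S (ltn_ord k).
  - exact: ltn_pred_S (ltn_ord l).
  by rewrite rmorphM scM hcomm4.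
under eq_bigr => k _ do under eq_bigr => l _ do rewrite E1.
have [<-|nn'] := eqVneq n n'.
- rewrite rmorph_sum sc_sum mulr_suml; apply: eq_bigr => k _.
  under eq_bigr => l _ do rewrite andbT eqSS (fun_if (fun x => _ * x)) mulr0.
  rewrite (sum_delta _ _ (fun l => sc (v k.+1 * v' l.+1)%:C * Qn e n)) ltn_ord.
  by [].
- by rewrite big1 // => k _; rewrite big1 // => l _; rewrite andbF mulr0.
Qed.
Variable beta : nat -> nat -> nat -> R.
Hypothesis B_orth : forall n : nat, (2 <= n)%N ->
     (Bmx beta n)^T *m Bmx beta n = 1%:M /\ Bmx beta n *m (Bmx beta n)^T = 1%:M.
Hypothesis B_diag : forall n : nat, (2 <= n)%N ->
     Bmx beta n *m Amx R n *m (Bmx beta n)^T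
       = diag_mx (\row_(i < n.-1) lam R i.+1 n).

Lemma row_orth n m m' : (2 <= n)%N -> (1 <= m <= n.-1)%N -> (1 <= m' <= n.-1)%N ->
  \sum_(k < n.-1) beta n m k.+1 * beta n m' k.+1 = (m == m')%:R.
Proof.
move=> hn; case: m => // m0 /= hm; case: m' => // m0' /= hm'.
have [_ H] := B_orth hn.
have := congr1 (fun M : 'M[R]_(n.-1) => M (Ordinal hm) (Ordinal hm')) H; rewrite !mxE /=.
under eq_bigr do rewrite !mxE.
by move=> ->; rewrite eqSS.
Qed.

Lemma c1 : (1 : R)%:C = 1 :> C. Proof. by []. Qed.
Lemma c0 : (0 : R)%:C = 0 :> C. Proof. by []. Qed.

Definition rB n m := rr n (beta n m).

Lemma rB_mul n m n' m' : (2 <= n)%N -> (1 <= m <= n.-1)%N ->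
  (2 <= n')%N -> (1 <= m' <= n'.-1)%N ->
  qstar (rB n m) * rB n' m' = if (n == n') && (m == m') then Qn e n else 0.
Proof.
move=> hn hm hn' hm'; rewrite /rB rr_mul //.
have [enn|nn] := eqVneq n n'; last by [].
subst n'; rewrite /= row_orth //.
by case: (m == m'); rewrite /= ?mulr1n ?mulr0n ?c1 ?c0 ?sc1 ?sc0 ?mul1r ?mul0r.
Qed.

Lemma rB_Q n m : (2 <= n)%N -> rB n m * Qn e n = rB n m.
Proof.
move=> hn; rewrite /rB /rr mulr_suml; apply: eq_bigr => k _.
by rewrite -mulrA -(mulrA (T _)) (Q_idem e_proj hn).
Qed.

Definition pB n m := rB n m * qstar (rB n m).

Lemma pB_star n m : qstar (pB n m) = pB n m.
Proof. by rewrite /pB qstarM qstarK. Qed.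

Lemma pB_idem n m : (2 <= n)%N -> (1 <= m <= n.-1)%N -> pB n m * pB n m = pB n m.
Proof.
move=> hn hm; rewrite /pB mulrA -(mulrA (rB n m)) rB_mul // !eqxx /=.
by rewrite rB_Q.
Qed.

Lemma pB_orth n m n' m' : (2 <= n)%N -> (1 <= m <= n.-1)%N ->
  (2 <= n')%N -> (1 <= m' <= n'.-1)%N -> (n, m) <> (n', m') ->
  pB n m * pB n' m' = 0.
Proof.
move=> hn hm hn' hm' neq; rewrite /pB mulrA -(mulrA (rB n m)) rB_mul //.
case: eqP => [enn|] /=; last by rewrite mulr0 mul0r.
case: eqP => [emm|] /=; last by rewrite mulr0 mul0r.
by case: neq; rewrite enn emm.
Qed.

Lemma pB_tr n m : (2 <= n)%N -> (1 <= m <= n.-1)%N -> qtr (pB n m) = qtr (Qn e n).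
Proof. by move=> hn hm; rewrite /pB qtrC rB_mul // !eqxx. Qed.
Lemma mk_Top : mk (Top e) = E e 0 * T 1 + T (-1) * E e 0.
Proof. by rewrite /Top /gadd mkDE /WM !mkME mk_emb mk_tpos mk_tneg. Qed.

Lemma E_T j k : E e j * T k = T k * E e (j + k).
Proof. exact: Phi_T. Qed.

Lemma EQ_gen (n p : nat) : (2 <= n)%N -> (1 <= p <= n)%N ->
  E e p%:Z * Qn e n = if (1 < p < n)%N then Qn e n else 0.
Proof.
move=> hn hp; case: ifP => hp'; first exact: EQ_in.
have [->|p1] := eqVneq p 1%N.
  by rewrite -(cE_Q e n 1) QE_1.
have -> : p = n by lia.
by rewrite -(cE_Q e n n%:Z) QE_n.
Qed.

Lemma top_X (n k : nat) : (2 <= n)%N -> (k < n.-1)%N ->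
  (E e 0 * T 1 + T (-1) * E e 0) * (T (k.+1)%:Z * Qn e n)
   = (if (k.+2 < n)%N then T (k.+2)%:Z * Qn e n else 0)
     + (if (0 < k)%N then T k%:Z * Qn e n else 0).
Proof.
move=> hn hk.
have hk1 : (k.+2 <= n)%N by case: n hn hk => // n /= hn hk; rewrite ltnS.
rewrite mulrDl; congr (_ + _).
- rewrite -mulrA (mulrA (T 1)) T_add.
  have -> : 1 + (k.+1)%:Z = (k.+2)%:Z by lia.
  rewrite mulrA E_T -mulrA add0r EQ_gen //.
  have -> : (1 < k.+2 < n)%N = (k.+2 < n)%N by [].
  by case: ifP => _; rewrite ?mulr0.
- rewrite -mulrA (mulrA (E _ _)) E_T -mulrA mulrA T_add.
  have -> : 0 + (k.+1)%:Z = (k.+1)%:Z by lia.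
  have -> : -1 + (k.+1)%:Z = k%:Z by lia.
  rewrite EQ_gen //.
  have -> : (1 < k.+1 < n)%N = (0 < k)%N by case: k hk hk1 => [|k'] _ h //=; rewrite h.
  by case: ifP => _; rewrite ?mulr0.
  by rewrite /= ltnW.
Qed.

Lemma Amx_sum (n : nat) (k : 'I_n.-1) (X : nat -> Q) : (2 <= n)%N ->
  \sum_(l < n.-1) sc ((Amx R n) k l)%:C * X l.+1
   = (if (k.+2 < n)%N then X k.+2 else 0) + (if (0 < k)%N then X k else 0).
Proof.
move=> hn.
have E1 : forall l : 'I_n.-1, sc ((Amx R n) k l)%:C * X l.+1 =
   (if k.+1 == l then X l.+1 else 0) + (if l.+1 == k then X l.+1 else 0).
  move=> l; rewrite mxE.
  case: eqP => h1; case: eqP => h2 /=; try lia;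
    by rewrite ?c1 ?c0 ?sc1 ?sc0 ?mul1r ?mul0r ?addr0 ?add0r.
rewrite (eq_bigr _ (fun l _ => E1 l)) big_split /= (sum_delta _ _ (fun p => X p.+1)); congr (_ + _).
  have e1 : forall kk, (kk.+1 < n.-1)%N = (kk.+2 < n)%N.
    by move=> kk; move: hn; case: (n) => // n' _; rewrite ltnS.
  by rewrite e1.
case: (nat_of_ord k) (ltn_ord k) => [|k'] hk /=.
  by rewrite big1 // => l _.
under eq_bigr => l _ do rewrite eqSS eq_sym.
by rewrite (sum_delta _ _ (fun p => X p.+1)) (ltn_trans (ltnSn k') hk).
Qed.

Lemma BA n m (l : 'I_n.-1) : (2 <= n)%N -> (1 <= m <= n.-1)%N ->
  \sum_(k < n.-1) beta n m k.+1 * (Amx R n) k l = lam R m n * beta n m l.+1.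
Proof.
move=> hn; case: m => // m0 /= hm.
have [H1 _] := B_orth hn.
have HBA : Bmx beta n *m Amx R n = diag_mx (\row_(i < n.-1) lam R i.+1 n) *m Bmx beta n.
  by rewrite -B_diag // -!mulmxA H1 mulmx1.
have := congr1 (fun M : 'M[R]_(n.-1) => M (Ordinal hm) l) HBA.
rewrite mul_diag_mx !mxE /=.
by under eq_bigr do rewrite mxE.
Qed.

Lemma top_r n m : (2 <= n)%N -> (1 <= m <= n.-1)%N ->
  (E e 0 * T 1 + T (-1) * E e 0) * rB n m = sc (lam R m n)%:C * rB n m.
Proof.
move=> hn hm; rewrite /rB /rr !mulr_sumr.
set Top := (E e 0 * T 1 + T (-1) * E e 0).
set X := fun p : nat => T p%:Z * Qn e n.
have S1 : forall k : 'I_n.-1, Top * (sc (beta n m k.+1)%:C * X k.+1) =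
  \sum_(l < n.-1) sc (beta n m k.+1 * (Amx R n) k l)%:C * X l.+1.
  move=> k; rewrite mulrA -sc_comm -mulrA /X top_X //.
  rewrite -(Amx_sum _ (fun p => T p%:Z * Qn e n)) // mulr_sumr.
  by apply: eq_bigr => l _; rewrite rmorphM scM mulrA.
rewrite (eq_bigr _ (fun k _ => S1 k)) exchange_big /=; apply: eq_bigr => l _.
rewrite -mulr_suml -sc_sum -rmorph_sum BA // rmorphM scM -mulrA.
by [].
Qed.

Lemma top_p n m : (2 <= n)%N -> (1 <= m <= n.-1)%N ->
  mk (Top e) * pB n m = sc (lam R m n)%:C * pB n m.
Proof. by move=> hn hm; rewrite mk_Top /pB mulrA top_r // mulrA. Qed.
Fixpoint allp (I : Type) (P : I -> Prop) (s : seq I) : Prop :=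
  if s is x :: s' then P x /\ allp P s' else True.

Lemma allp_cat (I : Type) (P : I -> Prop) s1 s2 : allp P s1 -> allp P s2 -> allp P (s1 ++ s2).
Proof. by elim: s1 => [|x s1 IH] //= [? ?] ?; split => //; apply: IH. Qed.

Lemma sum_allp (I : Type) (P : I -> Prop) (s : seq I) (F G : I -> C) :
  allp P s -> (forall x, P x -> F x = G x) -> \sum_(x <- s) F x = \sum_(x <- s) G x.
Proof.
elim: s => [|x s IH] /=; first by rewrite !big_nil.
by move=> [px ps] H; rewrite !big_cons H // IH.
Qed.

Definition good (S : int -> bool) (g : W) := g.2 = 0 /\ forall n, ~~ S n -> wf g n = 1%g.
Definition supp (q : Q) (S : int -> bool) :=
  exists a : galg C W, q = mk a /\ allp (fun z => good S z.2) a.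

Lemma supp_mono (q : Q) (S S' : int -> bool) :
  (forall n, S n -> S' n) -> supp q S -> supp q S'.
Proof.
move=> H [a [-> Ha]]; exists a; split => //.
elim: a Ha => [|x a IH] //= [[h1 h2] ha]; split; last exact: IH.
split=> // n hn; apply: h2; apply/negP => /H; exact/negP.
Qed.

Lemma supp_one S : supp 1 S.
Proof. by exists (gof C (wone U)); split => //=; split => //; split => // n. Qed.

Lemma qtr1 : qtr (1 : Q) = 1.
Proof. by rewrite -mk1 qtr_mk gcoef_gof asboolT. Qed.

Lemma good_del S (j : int) g u : good S g -> ~~ S j ->
  (wmul g (del j u) = wone U <-> g = wone U /\ u = 1%g).
Proof.
move=> [g2 g1] hj; split => [H|[-> ->]]; last by rewrite del1 wmulx1.
have := congr1 (fun z => wf z j) H; rewrite /wf /= g2 addr0 eqxx.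
rewrite -/(wf g j) g1 // mul1g => hu; subst u.
by move: H; rewrite del1 wmulx1.
Qed.

Lemma supp_Phi (q : Q) S (j : int) (b : galg C U) : supp q S -> ~~ S j ->
  supp (q * Phi j b) (fun n => S n || (n == j)) /\ qtr (q * Phi j b) = qtr q * gcoef b 1%g.
Proof.
move=> [a [-> Ha]] hj; rewrite /Phi -mkME; split.
  exists (gmul (@wmul U) a [seq (w.1, del j w.2) | w <- b]); split => //.
  have Hb : forall (c : C) g, good S g -> allp (fun z => good (fun n => S n || (n == j)) z.2)
      [seq (c * y.1, wmul g y.2) | y <- [seq (w.1, del j w.2) | w <- b]].
    move=> c g [x2 x1]; elim: (b) => [|w b' IHb] //=; split => //.
    split; first by rewrite /= x2.
    move=> n; rewrite negb_or => /andP[hn hnj]; rewrite /wf /= x2 addr0 (negbTE hnj) mulg1.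
    exact: x1.
  elim: a Ha => [|x a IH] //= [hx ha]; apply: allp_cat; last exact: IH.
  exact: Hb.
rewrite !qtr_mk gcoef_mul0 /gcoef mulr_suml; apply: (sum_allp Ha) => x hx.
rewrite big_map mulr_sumr; apply: eq_bigr => w _ /=.
have E1 := good_del w.2 hx hj.
case: asboolP => H1; case: asboolP => H2; case: asboolP => H3; rewrite ?mulr0 ?mul0r //.
all: exfalso; first [ by apply: H3; case/E1: H1 | by apply: H2; case/E1: H1 | by apply: H1; apply/E1 ].
Qed.

Definition tau := gcoef e 1%g.
Definition sig := gcoef (gsub (gof C 1%g) e) 1%g.

Lemma supp_fold (c k : nat) (q : Q) : supp q (fun n => n < c%:Z) ->
  supp (foldl *%R q [seq E e i%:Z | i <- iota c k]) (fun n => n < (c + k)%N%:Z) /\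
  qtr (foldl *%R q [seq E e i%:Z | i <- iota c k]) = qtr q * tau ^+ k.
Proof.
elim: k c q => [|k IH] c q hq /=; first by rewrite addn0 expr0 mulr1.
have hj : ~~ (c%:Z < c%:Z) by rewrite ltxx.
have [h1 h2] := supp_Phi e hq hj.
have h1' : supp (q * E e c%:Z) (fun n => n < c.+1%:Z).
  by apply: supp_mono h1 => n /orP[]; [lia | move/eqP ->; lia].
have [h3 h4] := IH _ _ h1'; split; first by rewrite -addSnnS.
by rewrite h4 /E h2 exprS mulrA.
Qed.
Lemma F_Phi j : F e j = Phi j (gsub (gof C 1%g) e).
Proof. by rewrite Phi_sub Phi1. Qed.

Lemma Q_tr n : (2 <= n)%N -> qtr (Qn e n) = sig * tau ^+ (n - 2) * sig.
Proof.
move=> hn; set f := gsub (gof C 1%g) e.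
have h0 := supp_one (fun m : int => m < 1).
have nj1 : ~~ ((1 : int) < 1) by rewrite ltxx.
have [h1 t1] := supp_Phi f h0 nj1.
have h1' : supp (1 * Phi 1 f) (fun m => m < 2%:Z).
  by apply: supp_mono h1 => m /orP[]; [lia | move/eqP ->; lia].
have [h2 t2] := supp_fold (n - 2) h1'.
have hn' : ~~ (n%:Z < (2 + (n - 2))%N%:Z) by rewrite subnKC // ltxx.
have [_ t3] := supp_Phi f h2 hn'.
have -> : Qn e n = foldl *%R (1 * Phi 1 f) [seq E e i%:Z | i <- iota 2 (n - 2)] * Phi n%:Z f.
  by rewrite /Qn /Pn foldl_prod big_map mul1r -!F_Phi.
by rewrite t3 t2 t1 qtr1 mul1r.
Qed.

Lemma coef_Phi0 (b : galg C U) u :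
  gcoef [seq (w.1, del 0 w.2) | w <- b] (del 0 u) = gcoef b u.
Proof.
rewrite gcoef_Phi gcoefE; congr npair; apply: funext => u' /=.
case: asboolP => H1; case: asboolP => H2 //.
- by case: H2; apply: del_inj H1.
- by case: H1; rewrite H2.
Qed.

Lemma proj_tr_pos (b : galg C U) : Phi 0 b * Phi 0 b = Phi 0 b ->
  qstar (Phi 0 b) = Phi 0 b -> ~ ga_eq b (gzero C U) -> 0 < gcoef b 1%g.
Proof.
move=> hidem hstar hne.
have nj : ~~ ((0 : int) < 0) by rewrite ltxx.
have [_ t] := supp_Phi b (supp_one (fun m : int => m < 0)) nj.
rewrite mul1r qtr1 mul1r in t.
have hn : qtr (Phi 0 b) = gnorm [seq (w.1, del 0 w.2) | w <- b].
  by rewrite -{1}hidem -{2}hstar; exact: qtr_norm.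
have [g0 g1] := gnorm_pos [seq (w.1, del 0 w.2) | w <- b].
rewrite -t hn lt0r g0 andbT; apply/eqP => /g1 H; apply: hne => u.
by rewrite -coef_Phi0 H gcoef_nil.
Qed.

Hypothesis e_ne0 : ~ ga_eq e (gzero C U).
Hypothesis e_ne1 : ~ ga_eq e (gof C 1%g).

Lemma tau_pos : 0 < tau.
Proof. by apply: proj_tr_pos => //; [apply: E_idem | apply: E_star]. Qed.

Lemma sig_pos : 0 < sig.
Proof.
apply: proj_tr_pos.
- by rewrite -F_Phi; apply: F_idem.
- by rewrite -F_Phi; apply: F_star.
move=> H; apply: e_ne1 => u; have := H u.
rewrite gcoef_cat gcoef_scale gcoef_nil mulN1r => /eqP; rewrite subr_eq0 => /eqP.
by move=> ->.
Qed.

Lemma sig_eq : sig = 1 - tau.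
Proof. by rewrite /sig gcoef_cat gcoef_scale gcoef_gof asboolT // mulN1r. Qed.

End Main.
From mathcomp Require Import ring lra.
Section Real.
Variable R : realType.

Lemma bern (y : R) (n : nat) : 0 <= y ->
  2 + 2 * n%:R * y + n%:R * (n%:R - 1) * y ^+ 2 <= 2 * (1 + y) ^+ n.
Proof.
move=> y0; elim: n => [|n IH]; first by rewrite expr0 mulr0 !mul0r !addr0 mulr1.
have hN : 0 <= n%:R * (n%:R - 1) :> R.
  case: n {IH} => [|n]; first by rewrite mul0r.
  by apply: mulr_ge0; rewrite ?ler0n // -natr1 addrK ler0n.
have h := ler_wpM2l (_ : 0 <= 1 + y) IH.
have h3 : 0 <= n%:R * (n%:R - 1) * y ^+ 3 :> R by apply: mulr_ge0 => //; apply: exprn_ge0.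
rewrite [(1 + y) ^+ n.+1]exprS -natr1.
have -> : 2 * ((1 + y) * (1 + y) ^+ n) = (1 + y) * (2 * (1 + y) ^+ n) by ring.
apply: le_trans (h _); last by lra.
rewrite !exprS expr0 !mulr1 in h3 *.
nra.
Qed.

Lemma cvg_nexpr (t : R) : 0 < t -> t < 1 ->
  ((fun n : nat => n%:R * t ^+ n) : R ^nat) @ \oo --> (0 : R).
Proof.
move=> t0 t1; pose y := t^-1 - 1.
have y0 : 0 < y by rewrite /y subr_gt0 invf_gt1.
have ty : t * (1 + y) = 1 by rewrite /y addrC subrK mulfV // gt_eqF.
pose c := 2 * (y + 1) / y ^+ 2.
apply: (@squeeze_cvgr _ _ _ _ (cst 0) (c *: @harmonic R)); last 2 first.
- exact: cvg_cst.
- by rewrite -(scaler0 _ c); exact: (cvgZl_tmp cvg_harmonic).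
apply: nearW => n /=; apply/andP; split.
  by apply: mulr_ge0; rewrite ?ler0n // exprn_ge0 // ltW.
set P := (1 + y) ^+ n.
have P0 : 0 < P by apply: exprn_gt0; lra.
have tP : t ^+ n = P^-1.
  by apply: (mulIf (lt0r_neq0 P0)); rewrite mulVf ?lt0r_neq0 // /P -exprMn ty expr1n.
rewrite tP /harmonic /= /c.
have N0 : 0 < n.+1%:R :> R by rewrite ltr0n.
rewrite (_ : (_ *: _) n = 2 * (y + 1) / y ^+ 2 * n.+1%:R^-1) //.
rewrite ler_pdivrMr // mulrAC ler_pdivlMr // mulrAC ler_pdivlMr ?exprn_gt0 //.
have hb := bern n (ltW y0).
rewrite -natr1.
have hN : 0 <= n%:R :> R by rewrite ler0n.
rewrite /P in hb P0 *.
set Q := (1 + y) ^+ n in hb P0 *.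
rewrite !exprS expr0 !mulr1 in hb *.
have h1 := ler_wpM2l (_ : 0 <= y + 1) hb.
have hN2 : 0 <= n%:R * (n%:R - 1) * (y * (y * y)) :> R.
  apply: mulr_ge0; last by apply: mulr_ge0; [lra | apply: mulr_ge0; lra].
  case: (n) => [|m]; first by rewrite mul0r.
  by apply: mulr_ge0; rewrite ?ler0n // -natr1 addrK ler0n.
have hy : 0 <= y by lra.
have hy2 : 0 <= y * y by nra.
have hNy : 0 <= n%:R * y :> R by nra.
nra.
Qed.

End Real.
Section Real2.
Variable R : realType.

Definition sq (t : R) (N : nat) : R :=
  \sum_(2 <= n < N) ((1 - t) * t ^+ (n - 2) * (1 - t)) *+ (n - 1).

Lemma sq_closed (t : R) (N : nat) :
  sq t N.+2 = 1 - (N.+1)%:R * t ^+ N + N%:R * t ^+ N.+1.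
Proof.
rewrite /sq; elim: N => [|N IH].
  by rewrite big_geq // expr0 mulr1 mul0r addr0 subrr.
rewrite big_nat_recr //= IH.
have -> : (N.+2 - 2)%N = N by lia.
have -> : (N.+2 - 1)%N = N.+1 by lia.
rewrite -[(1 - t) * _ * _ *+ _]mulr_natl -!natr1 !exprS.
ring.
Qed.

Lemma cvg_sq (t : R) : 0 < t -> t < 1 -> (sq t : R ^nat) @ \oo --> (1 : R).
Proof.
move=> t0 t1; rewrite -(cvg_shiftn 2).
have E1 : [sequence sq t (n + 2)%N]_n =
  (fun N => 1 - (N%:R * t ^+ N + t ^+ N) + t * (N%:R * t ^+ N)) :> R ^nat.
  apply: funext => N /=; rewrite addn2 sq_closed -natr1 exprS; ring.
rewrite E1.
suff H : (fun N : nat => 1 - (N%:R * t ^+ N + t ^+ N) + t * (N%:R * t ^+ N)) @ \oo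
    --> (1 - (0 + 0) + t * 0 : R).
  by rewrite addr0 mulr0 subr0 addr0 in H.
apply: cvgD.
  apply: cvgB; first exact: cvg_cst.
  apply: cvgD; first exact: cvg_nexpr.
  by apply: cvg_expr; rewrite ger0_norm ?ltW.
apply: cvgM; first exact: cvg_cst.
exact: cvg_nexpr.
Qed.

Lemma normC_real (x : R) : `|x%:C| = `|x|%:C :> R[i].
Proof. by rewrite normc_def /= expr0n addr0 sqrtr_sqr. Qed.

Lemma cvgC (u : R ^nat) (l : R) : u @ \oo --> l ->
  ((fun n => (u n)%:C) : (R[i])^o ^nat) @ \oo --> (l%:C : (R[i])^o).
Proof.
move/cvgrPdist_lt => H; apply/cvgrPdist_lt => eps eps0.
have /complex_realP [r er] : eps \is Num.real by apply: gtr0_real.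
subst eps; have r0 : 0 < r by rewrite -ltcR.
apply: filterS (H r r0) => n hn.
by rewrite /= -rmorphB normC_real ltcR.
Qed.

End Real2.
Unset Implicit Arguments.

Theorem lemma3p3 (R : realType) (U : groupType)
  (torsion : exists u : U, u != 1%g /\ exists k : nat, (0 < k)%N /\ (u ^+ k)%g = 1%g)
  (e : galg R[i] U)
  (e_proj : gprojection (@Umul U) (@Uinv U) e)
  (e_ne0 : ~ ga_eq e (gzero R[i] U))
  (e_ne1 : ~ ga_eq e (@gof R[i] U 1%g))
  (beta : nat -> nat -> nat -> R)
  (B_orth : forall n : nat, (2 <= n)%N ->
     (Bmx beta n)^T *m Bmx beta n = 1%:M /\ Bmx beta n *m (Bmx beta n)^T = 1%:M)
  (B_diag : forall n : nat, (2 <= n)%N ->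
     Bmx beta n *m Amx R n *m (Bmx beta n)^T
       = diag_mx (\row_(i < n.-1) lam R i.+1 n)) :
  (* each p_(m,n) is a projection *)
  (forall n m : nat, (2 <= n)%N -> (1 <= m <= n.-1)%N ->
     gprojection (@wmul U) (@winv U) (pmn e beta m n)) /\
  (* pairwise orthogonal *)
  (forall n m n' m' : nat, (2 <= n)%N -> (1 <= m <= n.-1)%N ->
     (2 <= n')%N -> (1 <= m' <= n'.-1)%N -> (n, m) <> (n', m') ->
     ga_eq (WM (pmn e beta m n) (pmn e beta m' n')) (gzero R[i] (wreath U))) /\
  (* complete: sum_(n>=2) sum_(m=1)^(n-1) tr(p_(m,n)) = 1 *)
  ((fun N : nat => (\sum_(2 <= n < N) \sum_(1 <= m < n)
        gtr (wone U) (pmn e beta m n) : (R[i])^o))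
     @ \oo --> (1 : (R[i])^o)) /\
  (* T p_(m,n) = lambda_(m,n) p_(m,n) *)
  (forall n m : nat, (2 <= n)%N -> (1 <= m <= n.-1)%N ->
     ga_eq (WM (Top e) (pmn e beta m n))
         (gscale ((lam R m n)%:C) (pmn e beta m n))).
Proof.
split.
  move=> n m hn hm; split.
  - by apply: mk_inj; rewrite mkS mk_pmn; exact: pB_star.
  - by apply: mk_inj; rewrite mkME mk_pmn; exact: (pB_idem e_proj B_orth hn hm).
split.
  move=> n m n' m' hn hm hn' hm' neq; apply: mk_inj.
  rewrite /WM mkME !mk_pmn /gzero mk0; exact: (pB_orth e_proj B_orth hn hm hn' hm' neq).
split; last first.
  move=> n m hn hm; apply: mk_inj; rewrite /WM mkME mk_scale mk_pmn.
  exact: (top_p e_proj B_orth B_diag hn hm).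
have tp := tau_pos e_proj e_ne0.
have /complex_realP [t et] : tau e \is Num.real by apply: gtr0_real.
have t0 : 0 < t by rewrite -ltcR -et.
have t1 : t < 1.
  have := sig_pos e_proj e_ne1; rewrite sig_eq et -c1 -rmorphB ltcR; lra.
have Hf : forall N : nat, (\sum_(2 <= n < N) \sum_(1 <= m < n)
        gtr (wone U) (pmn e beta m n) : (R[i])^o) = (sq t N)%:C.
  move=> N; rewrite /sq rmorph_sum; apply: eq_big_nat => n /andP[hn _].
  have -> : \sum_(1 <= m < n) gtr (wone U) (pmn e beta m n) =
            \sum_(1 <= m < n) (sig e * tau e ^+ (n - 2) * sig e).
    apply: eq_big_nat => m /andP[hm1 hm2].
    have hm : (1 <= m <= n.-1)%N by rewrite hm1 /= -ltnS prednK // (leq_trans _ hn).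
    by rewrite /gtr -qtr_mk mk_pmn -/(pB e beta n m) (pB_tr e_proj B_orth hn hm) Q_tr.
  rewrite sumr_const_nat sig_eq et -c1 -rmorphB rmorphMn !rmorphM rmorphXn.
  by [].
rewrite (eq_cvg _ _ Hf) -c1.
exact: (cvgC (cvg_sq t0 t1)).
Qed.
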